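(* Let $Q\ge2$ be an integer, let $i$ be any integer, and let $k\ge3$. Then \[ \begin{pmatrix}\nu_{k-1}(\gamma_i)&\nu_k(\gamma_i)\\ \nu_{k-2}(\gamma_{i+1})&\nu_{k-1}(\gamma_{i+1})\end{pmatrix}\in SL_2(\mathbb{Z}), \] i.e. $\nu_{k-1}(\gamma_i)\nu_{k-1}(\gamma_{i+1})-\nu_k(\gamma_i)\nu_{k-2}(\gamma_{i+1})=1$.
   Context: For $Q\in\mathbb{N}$, the Farey fractions of order $Q$ are $\mathcal{F}_Q=\{a/q\in\mathbb{Q}: 1\le q\le Q,\ 0<a\le q,\ \gcd(a,q)=1\}$. Write $\mathcal{F}_Q=\{\gamma_1,\ldots,\gamma_{N(Q)}\}$ with $1/Q=\gamma_1<\cdots<\gamma_{N(Q)}=1$, and extend to all $i\in\mathbb{Z}$ by $\gamma_{i+N(Q)}=\gamma_i+1$. Write $\gamma_i=p_i/q_i$ in lowest terms with $q_i>0$. For a positive integer $k$, $\nu_k(\gamma_i)=p_{i+k-1}q_{i-1}-p_{i-1}q_{i+k-1}$ (so $\nu_1\equiv1$). *)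

(* Defs.v *)
From mathcomp Require Import all_boot all_order all_algebra.
Set Implicit Arguments. Unset Strict Implicit. Unset Printing Implicit Defensive.
Import Order.TTheory GRing.Theory Num.Theory.
Local Open Scope ring_scope.

Definition farey (Q : nat) : seq rat :=
  sort <=%R [seq ((a%:Z)%:~R / (q%:Z)%:~R : rat)
            | q <- iota 1 Q, a <- [seq a <- iota 1 q | coprime a q]].

Definition farey_N (Q : nat) : nat := size (farey Q).

(* gamma_i for i : int, 1-based (gamma_1 = 1/Q, gamma_N = 1),
   extended by gamma_{i+N} = gamma_i + 1. *)
Definition gamma (Q : nat) (i : int) : rat :=
  let N := (farey_N Q)%:Z in
  nth 0 (farey Q) `|((i - 1) %% N)%Z|%N + (((i - 1) %/ N)%Z)%:~R.

Definition fp (Q : nat) (i : int) : int := numq (gamma Q i).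
Definition fq (Q : nat) (i : int) : int := denq (gamma Q i).

Definition nu (Q : nat) (k : nat) (i : int) : int :=
  fp Q (i + k%:Z - 1) * fq Q (i - 1) - fp Q (i - 1) * fq Q (i + k%:Z - 1).

(* Main.v *)
Require Import Defs.
From mathcomp Require Import all_boot all_order all_algebra.
From mathcomp Require Import zify ring lra.
Import Order.TTheory GRing.Theory Num.Theory.
Local Open Scope ring_scope.

Definition Dq (x y : rat) : int := numq y * denq x - numq x * denq y.

Lemma ltqE (x y : rat) : (x < y) = (numq x * denq y < numq y * denq x).
Proof. by rewrite -lt_ratE. Qed.
Lemma leqE (x y : rat) : (x <= y) = (numq x * denq y <= numq y * denq x).
Proof. by rewrite -le_ratE. Qed.

Lemma unit_int (a b : int) : 1 <= a -> a * b = 1 -> a = 1.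
Proof.
move=> h1 h2; have [hb|hb] := lerP b 0; first nia.
have : a <= a * b by nia. lia.
Qed.

Lemma num_den_frac (X Y : int) : 0 < Y -> coprimez X Y ->
  numq (X%:~R / Y%:~R) = X /\ denq (X%:~R / Y%:~R) = Y.
Proof.
move=> hY hc; split.
  by rewrite coprimeq_num // gtr0_sg // mul1r.
by rewrite coprimeq_den // gt_eqF // gtr0_norm.
Qed.

Lemma core (Q : int) (x y : rat) : 0 < x -> x < y -> y <= 1 ->
  denq x <= Q -> denq y <= Q ->
  (forall z : rat, 0 < z -> z <= 1 -> denq z <= Q -> z <= x \/ y <= z) ->
  Dq x y = 1.
Proof.
move=> x0 xy y1 bQ dQ H.
have hb := denq_gt0 x; have hd := denq_gt0 y.
have ha : 0 < numq x by rewrite numq_gt0.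
move: (xy) (y1); rewrite ltqE leqE (numq_int 1) (denq_int 1) !mul1r mulr1 => xy' y1'.
rewrite /Dq.
have /coprimezP [[u v] /= Huv] := coprime_num_den x.
set a := numq x in ha xy' Huv *; set b := denq x in hb bQ xy' Huv *.
set c := numq y in xy' y1' *; set d := denq y in hd dQ xy' y1' *.
have hdiv := divz_eq (Q + u) b.
have r0 : 0 <= ((Q + u) %% b)%Z by apply: modz_ge0; rewrite gt_eqF.
have rb : ((Q + u) %% b)%Z < b by apply: ltz_pmod.
set t := ((Q + u) %/ b)%Z in hdiv; set r := ((Q + u) %% b)%Z in hdiv r0 rb.
set Y := Q - r; set X := v + t * a.
have hXY : b * X - a * Y = 1 by rewrite /X /Y; nia.
have hY : 0 < Y by rewrite /Y; lia.
have hYQ : Y <= Q by rewrite /Y; lia.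
have [hf|hf] := ltrP (d * X - c * Y) 0.
  have cop : coprimez X Y by apply/coprimezP; exists (b, - a) => /=; lia.
  have [nz dz] := num_den_frac _ _ hY cop.
  set z := X%:~R / Y%:~R in nz dz.
  have xz : x < z by rewrite ltqE nz dz -/a -/b; nia.
  have zy : z < y by rewrite ltqE nz dz -/c -/d; nia.
  have dzQ : denq z <= Q by rewrite dz.
  have [zx|yz] := H z (lt_trans x0 xz) (le_trans (ltW zy) y1) dzQ.
    by move: (lt_le_trans xz zx); rewrite ltxx.
  by move: (lt_le_trans zy yz); rewrite ltxx.
have he : 1 <= c * b - a * d by lia.
have hid : (c * b - a * d) * Y + (d * X - c * Y) * b = d by nia.
have f0 : d * X - c * Y = 0.
  have [h1|h1] := lerP 1 (d * X - c * Y); last lia.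
  have e1 : Y <= (c * b - a * d) * Y by nia.
  have e2 : b <= (d * X - c * Y) * b by nia.
  rewrite /Y in e1; lia.
have hcY : c * Y = (c * b - a * d) * X * Y.
  rewrite f0 mul0r addr0 in hid.
  have -> : c * Y = d * X by lia.
  rewrite -[in LHS]hid; ring.
have hc : c = (c * b - a * d) * X by apply: (mulIf (lt0r_neq0 hY)).
have /coprimezP [[u' v'] /= Huv'] := coprime_num_den y.
apply: (@unit_int _ (u' * X + v' * Y)) => //.
have hd2 : d = (c * b - a * d) * Y by move: hid; rewrite f0 mul0r addr0.
rewrite -/c -/d in Huv'.
set e := (c * b - a * d) in hc hd2 *.
rewrite -Huv' [in RHS]hc [in RHS]hd2; ring.
Qed.

Lemma mem_farey Q r : (r \in farey Q) = [&& 0 < r, r <= 1 & denq r <= Q%:Z].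
Proof.
rewrite /farey mem_sort; apply/allpairsPdep/idP.
  move=> [q [a [hq ha ->]]].
  rewrite mem_iota in hq; rewrite mem_filter mem_iota in ha.
  case/andP: ha => cop /andP[a1 aq].
  have q0 : 0 < q%:Z by rewrite ltz_nat; lia.
  have [nz dz] := num_den_frac (a%:Z) (q%:Z) q0 cop.
  rewrite -[(a%:Z)%:~R / _]divq_num_den nz dz.
  apply/and3P; split.
  - rewrite divr_gt0 // ltr0z; lia.
  - rewrite ler_pdivrMr ?ltr0z // mul1r ler_int; lia.
  - rewrite dz; lia.
case/and3P => r0 r1 rQ.
have hd := denq_gt0 r; have hn : 0 < numq r by rewrite numq_gt0.
move: r1; rewrite leqE (numq_int 1) (denq_int 1) mul1r mulr1 => r1.
exists `|denq r|%N, `|numq r|%N; split.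
- rewrite mem_iota; lia.
- rewrite mem_filter mem_iota; apply/andP; split; first exact: coprime_num_den.
  lia.
- by rewrite !gtz0_abs // divq_num_den.
Qed.

Lemma farey_uniq Q : uniq (farey Q).
Proof.
rewrite sort_uniq; apply: allpairs_uniq_dep.
- exact: iota_uniq.
- by move=> q _; rewrite filter_uniq // iota_uniq.
move=> [q1 a1] [q2 a2] /allpairsPdep [q1' [a1' [h1 h1' [e1 e1']]]].
move=> /allpairsPdep [q2' [a2' [h2 h2' [e2 e2']]]] /=.
subst => E.
rewrite !mem_filter !mem_iota in h1' h2'; rewrite !mem_iota in h1 h2.
case/andP: h1' => c1 /andP[p1 _]; case/andP: h2' => c2 /andP[p2 _].
have q10 : 0 < q1'%:Z by rewrite ltz_nat; lia.
have q20 : 0 < q2'%:Z by rewrite ltz_nat; lia.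
have [n1 d1] := num_den_frac (a1'%:Z) (q1'%:Z) q10 c1.
have [n2 d2] := num_den_frac (a2'%:Z) (q2'%:Z) q20 c2.
rewrite E n2 in n1; rewrite E d2 in d1.
case: n1 => ->; case: d1 => ->; done.
Qed.

Lemma num_den_shift x z : numq (x + z%:~R) = numq x + z * denq x /\ denq (x + z%:~R) = denq x.
Proof.
have e : x + z%:~R = (numq x + z * denq x)%:~R / (denq x)%:~R.
  by rewrite rmorphD rmorphM /= mulrDl mulfK ?intr_eq0 ?denq_neq0 // divq_num_den.
have cop : coprimez (numq x + z * denq x) (denq x).
  have /coprimezP [[u v] /= Huv] := coprime_num_den x.
  apply/coprimezP; exists (u, v - u * z) => /=; rewrite -Huv; ring.
by rewrite e; apply: num_den_frac => //; apply: denq_gt0.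
Qed.

Lemma Dq_shift x y z : Dq (x + z%:~R) (y + z%:~R) = Dq x y.
Proof.
rewrite /Dq; have [n1 d1] := num_den_shift x z; have [n2 d2] := num_den_shift y z.
rewrite n1 d1 n2 d2; ring.
Qed.

Lemma plucker a b c d :
  Dq a c * Dq b d - Dq a d * Dq b c = Dq a b * Dq c d.
Proof. rewrite /Dq; ring. Qed.

Section F.
Variable Q : nat.
Hypothesis hQ : (1 <= Q)%N.
Local Notation F := (farey Q).

Lemma sortedF : sorted <=%R F.
Proof. apply: sort_sorted; exact: le_total. Qed.

Lemma leF i j : (i <= j)%N -> (j < size F)%N -> nth 0 F i <= nth 0 F j.
Proof.
move=> ij jN; apply: (sorted_leq_nth le_trans lexx) => //; first exact: sortedF.
rewrite inE; exact: leq_ltn_trans ij jN.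
Qed.

Lemma mem1 : (1 : rat) \in F.
Proof. by rewrite mem_farey ltr01 lexx (denq_int 1) /=; lia. Qed.

Lemma sizeF : (0 < size F)%N.
Proof. by case: F mem1. Qed.

Lemma consec j : (j.+1 < size F)%N -> Dq (nth 0 F j) (nth 0 F j.+1) = 1.
Proof.
move=> jN.
have jN' : (j < size F)%N by apply: ltnW.
have mx := mem_nth 0 jN'; have my := mem_nth 0 jN.
rewrite mem_farey in mx; rewrite mem_farey in my.
case/and3P: mx => x0 _ xQ; case/and3P: my => _ y1 yQ.
have xy : nth 0 F j < nth 0 F j.+1.
  rewrite lt_neqAle leF // andbT.
  have U := nth_uniq 0 jN' jN (farey_uniq Q).
  apply/eqP => E; rewrite E eqxx in U; move/esym/eqP: U; lia.
apply: (@core Q%:Z) => // z z0 z1 zQ.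
have zF : z \in F by rewrite mem_farey z0 z1.
have lN : (index z F < size F)%N by rewrite index_mem.
have [lj|jl] := leqP (index z F) j.
  by left; rewrite -(nth_index 0 zF); apply: leF.
by right; rewrite -(nth_index 0 zF); apply: leF.
Qed.

Lemma lastF : nth 0 F (size F).-1 = 1.
Proof.
have hN := sizeF.
have hl : ((size F).-1 < size F)%N by lia.
apply/eqP; rewrite eq_le; apply/andP; split.
  by have := mem_nth (0:rat) hl; rewrite mem_farey => /and3P[].
have lN : (index (1:rat) F < size F)%N by rewrite index_mem mem1.
rewrite -{1}(nth_index (0:rat) mem1); apply: leF => //; lia.
Qed.

Lemma firstF : nth 0 F 0 = 1%:~R / (Q%:Z)%:~R.
Proof.
have Q0 : 0 < Q%:Z by rewrite ltz_nat.
have [n1 d1] := num_den_frac 1 (Q%:Z) Q0 (coprime1n _).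
have mQ : 1%:~R / (Q%:Z)%:~R \in F.
  rewrite mem_farey d1 lexx andbT; apply/andP; split.
    by rewrite -numq_gt0 n1.
  by rewrite leqE n1 d1 (numq_int 1) (denq_int 1); lia.
have lN : (index (1%:~R / (Q%:Z)%:~R) F < size F)%N by rewrite index_mem.
apply/eqP; rewrite eq_le; apply/andP; split.
  by rewrite -(nth_index 0 mQ); apply: leF.
have := mem_nth (0:rat) sizeF; rewrite mem_farey => /and3P[z0 _ zQ].
rewrite leqE n1 d1 mul1r.
have : 0 < numq (nth 0 F 0) by rewrite numq_gt0.
move: zQ; set n := numq _; set d := denq _ => zQ hn; nia.
Qed.

End F.

Lemma gamma_step Q m : (1 <= Q)%N -> Dq (gamma Q m) (gamma Q (m + 1)) = 1.
Proof.
move=> hQ; rewrite /gamma /farey_N.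
have sF := sizeF Q hQ.
set N := (size (farey Q))%:Z.
have N0 : 0 < N by rewrite /N ltz_nat.
have e : m + 1 - 1 = (m - 1) + 1 by ring.
rewrite e; set t := m - 1.
have hdiv := divz_eq t N.
have r0 : 0 <= (t %% N)%Z by apply: modz_ge0; rewrite gt_eqF.
have rN : (t %% N)%Z < N by apply: ltz_pmod.
have hdiv1 := divz_eq (t + 1) N.
have s0 : 0 <= ((t + 1) %% N)%Z by apply: modz_ge0; rewrite gt_eqF.
have sN : ((t + 1) %% N)%Z < N by apply: ltz_pmod.
set q := (t %/ N)%Z in hdiv *; set r := (t %% N)%Z in hdiv r0 rN *.
set q1 := ((t + 1) %/ N)%Z in hdiv1 *; set s := ((t + 1) %% N)%Z in hdiv1 s0 sN *.
have [n hn] : exists n : nat, r = n%:Z by exists `|r|%N; rewrite gez0_abs.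
rewrite hn absz_nat.
have [lt|ge] := ltnP n.+1 (size (farey Q)).
  have eq1 : q1 = q.
    rewrite /q1 hdiv -addrA divzMDl ?gt_eqF // divz_small ?addr0 //.
    rewrite /N absz_nat hn; lia.
  have eq2 : s = n.+1%:Z by lia.
  rewrite eq1 eq2 absz_nat Dq_shift; exact: consec.
have hn1 : n.+1 = size (farey Q) by rewrite /N in rN; lia.
have eq1 : q1 = q + 1.
  rewrite /q1 (_ : t + 1 = (q + 1) * N + 0); last by rewrite /N -hn1; lia.
  by rewrite divzMDl ?gt_eqF // div0z addr0.
have eq2 : s = 0 by lia.
rewrite eq1 eq2 /= (_ : n = (size (farey Q)).-1); last by rewrite -hn1.
rewrite lastF // firstF // rmorphD /= addrA [_ + q%:~R]addrC -addrA.
rewrite [(q%:~R + _)]addrC addrA Dq_shift.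
have H := Dq_shift 0 (1%:~R / (Q%:Z)%:~R) 1.
rewrite add0r in H.
rewrite H /Dq (numq_int 0) mul0r subr0 (denq_int 0) mulr1.
have Q0 : 0 < Q%:Z by rewrite ltz_nat.
by have [-> _] := num_den_frac 1 (Q%:Z) Q0 (coprime1n _).
Qed.

Theorem lemma1 (Q : nat) (i : int) (k : nat) :
  (2 <= Q)%N -> (3 <= k)%N ->
  nu Q k.-1 i * nu Q k.-1 (i + 1) - nu Q k i * nu Q k.-2 (i + 1) = 1.
Proof.
move=> hQ hk; have hQ1 : (1 <= Q)%N by lia.
have nuE : forall k i, nu Q k i = Dq (gamma Q (i - 1)) (gamma Q (i + k%:Z - 1)) by [].
rewrite !nuE.
case: k hk => [|[|[|k']]] // _ /=.
set a := i - 1; set c := i + k'%:Z + 1.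
have e1 : i + (k'.+2)%:Z - 1 = c by rewrite /c; lia.
have e2 : i + 1 - 1 = a + 1 by rewrite /a; lia.
have e3 : i + 1 + (k'.+2)%:Z - 1 = c + 1 by rewrite /c; lia.
have e4 : i + (k'.+3)%:Z - 1 = c + 1 by rewrite /c; lia.
have e5 : i + 1 + (k'.+1)%:Z - 1 = c by rewrite /c; lia.
rewrite e1 e2 e3 e4 e5 plucker !gamma_step //.
Qed.
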